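(* There exists a curve $\Gamma$ in the Euclidean plane $\mathbb{R}^2$ such that $\mathcal{H}^1(\Gamma)<\infty$ and $S_{\Gamma,2-\epsilon}(\mathscr{G})=\infty$ for every multiresolution family $\mathscr{G}$ for $\Gamma$ (of any inflation factor $>1$) and every $\epsilon\in(0,2)$.
   Context: $\mathbb{R}^2$ carries the Euclidean norm. For a nonempty set $E\subset\mathbb{R}^2$ and a set $Q$ of positive diameter, the Jones beta number is $\beta_E(Q)=\inf_L\sup_{x\in E\cap Q}\mathrm{dist}(x,L)/\mathrm{diam}\,Q$ if $E\cap Q\neq\emptyset$, where $L$ ranges over all lines, and $\beta_E(Q)=0$ if $E\cap Q=\emptyset$. For $\rho>0$, a $\rho$-net for $E$ is a set $X\subset E$ such that $|y-z|\geq\rho$ for all distinct $y,z\in X$ and $\mathrm{dist}(x,X)<\rho$ for all $x\in E$. A multiresolution family for $E$ with inflation factor $A>1$ is the collection of closed balls $\mathscr{G}=\{B(x,A2^{-k}):x\in X_k,\ k\in\mathbb{Z}\}$ (indexed by the pairs $(k,x)$), where $(X_k)_{k\in\mathbb{Z}}$ is a nested family ($X_k\subset X_{k+1}$) and each $X_k$ is a $2^{-k}$-net for $E$. For $0<r<\infty$, $S_{E,r}(\mathscr{G})=\mathrm{diam}\,E+\sum_{Q\in\mathscr{G}}\beta_E(Q)^r\,\mathrm{diam}\,Q$. A curve is the image of a continuous map from $[0,1]$. *)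

(* Defs.v *)
From Stdlib Require Import Reals Lra List ClassicalEpsilon.
Open Scope R_scope.

Definition pt := (R * R)%type.

Definition dist (x y : pt) : R :=
  sqrt ((fst x - fst y) ^ 2 + (snd x - snd y) ^ 2).

(* Supremum of a set of reals (least upper bound when the set is nonempty
   and bounded above; junk value 0 otherwise), and infimum. *)
Definition Rsup (P : R -> Prop) : R :=
  match excluded_middle_informative (bound P /\ exists x, P x) with
  | left h => proj1_sig (completeness P (proj1 h) (proj2 h))
  | right _ => 0
  end.

Definition Rinf (P : R -> Prop) : R := - Rsup (fun y => P (- y)).

Definition diam (E : pt -> Prop) : R :=
  Rsup (fun d => exists x y, E x /\ E y /\ d = dist x y).

Definition is_line (L : pt -> Prop) : Prop :=
  exists (p v : pt), v <> (0, 0) /\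
    forall z, L z <-> exists t : R, z = (fst p + t * fst v, snd p + t * snd v).

Definition dist_set (x : pt) (L : pt -> Prop) : R :=
  Rinf (fun d => exists y, L y /\ d = dist x y).

Definition beta (E Q : pt -> Prop) : R :=
  match excluded_middle_informative (exists x, E x /\ Q x) with
  | left _ =>
      Rinf (fun b => exists L, is_line L /\
              b = Rsup (fun s => exists x, E x /\ Q x /\ s = dist_set x L) / diam Q)
  | right _ => 0
  end.

Definition rpow (b r : R) : R :=
  match Rlt_dec 0 b with left _ => Rpower b r | right _ => 0 end.

Definition cball (x : pt) (r : R) : pt -> Prop := fun y => dist x y <= r.

Definition pow2m (k : Z) : R := powerRZ 2 (- k).

Definition is_net (E X : pt -> Prop) (rho : R) : Prop :=
  (forall x, X x -> E x) /\
  (forall y z, X y -> X z -> y <> z -> dist y z >= rho) /\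
  (forall x, E x -> exists y, X y /\ dist x y < rho).

(* nested family of 2^{-k}-nets; the multiresolution family with inflation
   factor A is {B(x, A 2^{-k}) : x in X_k, k in Z}, indexed by (k,x). *)
Definition multires_nets (E : pt -> Prop) (X : Z -> pt -> Prop) : Prop :=
  (forall k x, X k x -> X (k + 1)%Z x) /\
  (forall k, is_net E (X k) (pow2m k)).

Definition S_term (E : pt -> Prop) (A r : R) (kx : Z * pt) : R :=
  let Q := cball (snd kx) (A * pow2m (fst kx)) in
  rpow (beta E Q) r * diam Q.

(* S_{E,r}(G) = infinity: the partial sums of diam E + sum over the
   (nonnegative) terms indexed by pairs (k,x), x in X_k, are unbounded. *)
Definition S_infinite (E : pt -> Prop) (A : R) (X : Z -> pt -> Prop) (r : R) : Prop :=
  forall M : R, exists l : list (Z * pt),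
    NoDup l /\ (forall kx, In kx l -> X (fst kx) (snd kx)) /\
    diam E + fold_right (fun kx acc => S_term E A r kx + acc) 0 l > M.

Definition continuous_on_01 (g : R -> pt) : Prop :=
  forall t, 0 <= t <= 1 -> forall eps, eps > 0 -> exists delta, delta > 0 /\
    forall s, 0 <= s <= 1 -> Rabs (s - t) < delta -> dist (g s) (g t) < eps.

Definition image01 (g : R -> pt) : pt -> Prop :=
  fun z => exists t, 0 <= t <= 1 /\ z = g t.

(* H^1(E) < infinity: sup_{delta>0} H^1_delta(E) < infinity, where
   H^1_delta(E) = inf { sum_n diam U_n : E subset U_n U_n, diam U_n <= delta }.
   (d n) is an upper bound on diam (U n). *)
Definition H1_finite (E : pt -> Prop) : Prop :=
  exists M : R, forall delta, delta > 0 ->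
    exists (U : nat -> pt -> Prop) (d : nat -> R),
      (forall x, E x -> exists n, U n x) /\
      (forall n, 0 <= d n <= delta) /\
      (forall n x y, U n x -> U n y -> dist x y <= d n) /\
      (forall N, sum_f_R0 d N <= M).

(* Main.v *)
Require Import Defs.
From Stdlib Require Import Reals Lra Lia List ClassicalEpsilon.
From Coquelicot Require Import Coquelicot.
Open Scope R_scope.

Definition rnd (y : R) : Z := (up (y + /2) - 1)%Z.

Lemma rnd_spec y : Rabs (y - IZR (rnd y)) <= /2.
Proof.
  unfold rnd. destruct (archimed (y + /2)) as [H1 H2].
  rewrite minus_IZR. apply Rabs_le. split; simpl; lra.
Qed.

Definition T (y : R) : R := Rabs (y - IZR (rnd y)).

Lemma T_min y (n : Z) : T y <= Rabs (y - IZR n).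
Proof.
  unfold T. pose proof (rnd_spec y) as H.
  destruct (Z.eq_dec n (rnd y)) as [->|Hne]; [lra|].
  assert (Hz : (n <= rnd y - 1)%Z \/ (n >= rnd y + 1)%Z) by lia.
  destruct Hz as [Hz|Hz].
  - apply IZR_le in Hz. rewrite minus_IZR in Hz. simpl in Hz.
    pose proof H as H'. apply Rabs_le_between in H'. rewrite (Rabs_right (y - IZR n)); [|lra]. lra.
  - apply Z.ge_le, IZR_le in Hz. rewrite plus_IZR in Hz. simpl in Hz.
    pose proof H as H'. apply Rabs_le_between in H'. rewrite (Rabs_left1 (y - IZR n)); [|lra]. lra.
Qed.

Lemma T_nonneg y : 0 <= T y.
Proof. apply Rabs_pos. Qed.

Lemma T_le_half y : T y <= /2.
Proof. apply rnd_spec. Qed.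

Lemma T_lip y z : Rabs (T y - T z) <= Rabs (y - z).
Proof.
  assert (forall a b, T a <= Rabs (a - b) + T b).
  { intros a b. pose proof (T_min a (rnd b)). unfold T at 2.
    pose proof (Rabs_triang (a - b) (b - IZR (rnd b))).
    replace (a - b + (b - IZR (rnd b))) with (a - IZR (rnd b)) in H0 by ring. lra. }
  apply Rabs_le. pose proof (H y z). pose proof (H z y).
  rewrite Rabs_minus_sym in H1. pose proof (Rabs_pos (y-z)). lra.
Qed.

Lemma T_int (n : Z) : T (IZR n) = 0.
Proof.
  pose proof (T_min (IZR n) n). pose proof (T_nonneg (IZR n)).
  replace (IZR n - IZR n) with 0 in H by ring. rewrite Rabs_R0 in H. lra.
Qed.

Lemma T_lower y (q : Z) (hq : IZR q <= y <= IZR q + 1) :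
  Rmin (y - IZR q) (IZR q + 1 - y) <= T y.
Proof.
  unfold T. set (n0 := rnd y).
  assert (Hz : (n0 <= q)%Z \/ (n0 >= q + 1)%Z) by lia.
  destruct Hz as [Hz|Hz].
  - apply IZR_le in Hz. rewrite Rabs_right by lra.
    apply Rle_trans with (y - IZR q); [apply Rmin_l|lra].
  - apply Z.ge_le, IZR_le in Hz. rewrite plus_IZR in Hz. simpl in Hz.
    rewrite Rabs_left1 by lra.
    apply Rle_trans with (IZR q + 1 - y); [apply Rmin_r|lra].
Qed.

Lemma T_left (q : Z) y : IZR q <= y <= IZR q + /2 -> T y = y - IZR q.
Proof.
  intros H. apply Rle_antisym.
  - pose proof (T_min y q). rewrite Rabs_right in H0 by lra. lra.
  - pose proof (T_lower y q ltac:(lra)). unfold Rmin in H0.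
    destruct (Rle_dec _ _); lra.
Qed.

Lemma T_right (q : Z) y : IZR q + /2 <= y <= IZR q + 1 -> T y = IZR q + 1 - y.
Proof.
  intros H. apply Rle_antisym.
  - pose proof (T_min y (q+1)). rewrite plus_IZR in H0. simpl in H0.
    rewrite Rabs_left1 in H0 by lra. lra.
  - pose proof (T_lower y q ltac:(lra)). unfold Rmin in H0.
    destruct (Rle_dec _ _); lra.
Qed.

Definition jb (n : nat) : nat := Nat.log2 (S n).
Definition c (n : nat) : R := / (sqrt 2 ^ jb n * (INR (jb n) + 1)).

Lemma sqrt2_ge1 : 1 <= sqrt 2.
Proof. rewrite <- sqrt_1. apply sqrt_le_1_alt. lra. Qed.

Lemma c_pos n : 0 < c n.
Proof.
  unfold c. apply Rinv_0_lt_compat. apply Rmult_lt_0_compat.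
  - apply pow_lt. pose proof sqrt2_ge1. lra.
  - pose proof (pos_INR (jb n)). lra.
Qed.

Lemma c_le1 n : c n <= 1.
Proof.
  unfold c. rewrite <- Rinv_1. apply Rinv_le_contravar; [lra|].
  pose proof (pos_INR (jb n)). pose proof (pow_R1_Rle (sqrt 2) (jb n) sqrt2_ge1).
  nra.
Qed.

Lemma c_sq n : c n * c n = / (2 ^ jb n * ((INR (jb n) + 1) * (INR (jb n) + 1))).
Proof.
  unfold c. rewrite <- Rinv_mult. f_equal.
  replace (2 ^ jb n) with (sqrt 2 ^ jb n * sqrt 2 ^ jb n).
  - ring.
  - rewrite <- Rpow_mult_distr. rewrite sqrt_sqrt by lra. reflexivity.
Qed.

Definition term (n : nat) (x : R) : R := c n * / 2 ^ n * T (2 ^ n * x).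

Fixpoint psum (a : nat -> R) (N : nat) : R :=
  match N with O => 0 | S N' => psum a N' + a N' end.

Lemma pow2_pos n : 0 < 2 ^ n.
Proof. apply pow_lt. lra. Qed.

Lemma inv_pow2 n : / 2 ^ n = (/2) ^ n.
Proof. rewrite pow_inv. reflexivity. Qed.

Lemma term_bounds n x : 0 <= term n x <= (/2) ^ n * /2.
Proof.
  unfold term. pose proof (c_pos n). pose proof (c_le1 n).
  pose proof (T_nonneg (2^n*x)). pose proof (T_le_half (2^n*x)).
  rewrite inv_pow2. pose proof (pow_lt (/2) n ltac:(lra)).
  split.
  - apply Rmult_le_pos; [|lra]. apply Rmult_le_pos; lra.
  - apply Rmult_le_compat; try lra.
    + apply Rmult_le_pos; lra.
    + rewrite <- (Rmult_1_l ((/2)^n)) at 2. apply Rmult_le_compat_r; lra.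
Qed.

Lemma geom_half_ex : ex_series (fun n => (/2) ^ n * /2).
Proof.
  apply ex_series_scal_r. apply ex_series_geom. rewrite Rabs_right; lra.
Qed.

Lemma term_ex x : ex_series (fun n => term n x).
Proof.
  apply (@ex_series_le R_AbsRing R_CompleteNormedModule _ (fun n => (/2) ^ n * /2)).
  - intros n. change (norm (term n x)) with (Rabs (term n x)).
    pose proof (term_bounds n x). rewrite Rabs_right; lra.
  - apply geom_half_ex.
Qed.

Definition f (x : R) : R := Series (fun n => term n x).
Definition tail (N : nat) (x : R) : R := Series (fun k => term (N + k) x).

Lemma f_split N x : f x = psum (fun n => term n x) N + tail N x.
Proof.
  induction N.
  - unfold tail. simpl. rewrite Rplus_0_l. reflexivity.
  - rewrite IHN. simpl. unfold tail.
    rewrite (Series_incr_1 (fun k => term (N + k) x)).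
    + replace (N + 0)%nat with N by lia.
      rewrite Rplus_assoc. f_equal. f_equal. apply Series_ext. intros k.
      f_equal. lia.
    + apply (ex_series_incr_n (fun n => term n x) N). apply term_ex.
Qed.

Lemma tail_bounds N x : 0 <= tail N x <= / 2 ^ N.
Proof.
  unfold tail. split.
  - apply (Rle_trans _ (Series (fun k : nat => 0 * term k x))).
    + rewrite Series_scal_l. lra.
    + apply Series_le.
      * intros n. pose proof (term_bounds n x). pose proof (term_bounds (N+n) x). lra.
      * apply (ex_series_incr_n (fun n => term n x) N). apply term_ex.
  - apply (Rle_trans _ (Series (fun k => (/2)^N * /2 * (/2)^k))).
    + apply Series_le.
      * intros n. pose proof (term_bounds (N+n) x). rewrite pow_add in H. lra.
      * apply (@ex_series_ext R_AbsRing R_NormedModule (fun k => (/2)^k * ((/2)^N * /2))). intros; simpl; ring.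
        apply ex_series_scal_r. apply ex_series_geom. rewrite Rabs_right; lra.
    + rewrite Series_scal_l. rewrite Series_geom by (rewrite Rabs_right; lra).
      rewrite inv_pow2. apply Req_le. field.
Qed.

Lemma tail_dyadic N x (z : Z) : 2 ^ N * x = IZR z -> tail N x = 0.
Proof.
  intros Hz. unfold tail.
  rewrite (Series_ext _ (fun k => 0 * term k x)).
  - rewrite Series_scal_l. ring.
  - intros k. unfold term. rewrite pow_add.
    replace (2 ^ N * 2 ^ k * x) with (IZR (z * 2 ^ Z.of_nat k)).
    + rewrite T_int. ring.
    + rewrite mult_IZR. rewrite <- Hz. rewrite <- pow_IZR. simpl. ring.
Qed.

Lemma INR_pow2 k : INR (2 ^ k) = 2 ^ k.
Proof. rewrite pow_INR. simpl. f_equal. Qed.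

Lemma half_cell_nat n N i : (n < N)%nat ->
  exists q d : nat, (0 < d)%nat /\ (2 ^ N = 2 ^ n * (2 * d))%nat /\
   ((2 * q * d <= i /\ i + 1 <= 2 * q * d + d)%nat \/
    ((2 * q + 1) * d <= i /\ i + 1 <= (2 * q + 2) * d)%nat).
Proof.
  intros Hn. set (d := (2 ^ (N - n - 1))%nat).
  assert (Hd : (0 < d)%nat) by (unfold d; apply Nat.neq_0_lt_0, Nat.pow_nonzero; lia).
  assert (HN : (2 ^ N = 2 ^ n * (2 * d))%nat).
  { unfold d. rewrite <- Nat.pow_succ_r'. rewrite <- Nat.pow_add_r. f_equal. lia. }
  pose proof (Nat.div_mod i d ltac:(lia)) as Hdm.
  pose proof (Nat.mod_upper_bound i d ltac:(lia)) as Hmb.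
  set (p := (i / d)%nat) in *. set (s := (i mod d)%nat) in *.
  destruct (Nat.Even_or_Odd p) as [[q Hq]|[q Hq]].
  - exists q, d. split; [lia|split; [exact HN|left]]. rewrite Hq in Hdm. nia.
  - exists q, d. split; [lia|split; [exact HN|right]]. rewrite Hq in Hdm. nia.
Qed.

Lemma T_aff n N i : (n < N)%nat ->
  exists sg : R, forall x, INR i / 2 ^ N <= x <= INR (i + 1) / 2 ^ N ->
    T (2 ^ n * x) = T (2 ^ n * (INR i / 2 ^ N)) + sg * (x - INR i / 2 ^ N).
Proof.
  intros Hn. destruct (half_cell_nat n N i Hn) as [q [d [Hd [HN Hc]]]].
  assert (HN' : 2 ^ N = 2 ^ n * (2 * INR d)).
  { rewrite <- INR_pow2, HN, mult_INR, mult_INR, INR_pow2. simpl. ring. }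
  pose proof (pow2_pos n) as Hp. pose proof (lt_0_INR d ltac:(lia)) as HdR.
  assert (Hq : IZR (Z.of_nat q) = INR q) by (rewrite <- INR_IZR_INZ; reflexivity).
  assert (E : forall x, 2 ^ n * x = x * 2 ^ N / (2 * INR d)).
  { intros x. rewrite HN'. field. lra. }
  assert (Hx1 : forall x, INR i / 2 ^ N <= x -> INR i / (2 * INR d) <= 2 ^ n * x).
  { intros x H. rewrite E. apply Rmult_le_compat_r. apply Rlt_le, Rinv_0_lt_compat; lra.
    apply (Rmult_le_compat_r (2^N)) in H; [|apply Rlt_le, pow2_pos].
    unfold Rdiv in H. rewrite Rmult_assoc, Rinv_l in H. lra. apply Rgt_not_eq, pow2_pos. }
  assert (Hx2 : forall x, x <= INR (i+1) / 2 ^ N -> 2 ^ n * x <= INR (i+1) / (2 * INR d)).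
  { intros x H. rewrite E. apply Rmult_le_compat_r. apply Rlt_le, Rinv_0_lt_compat; lra.
    apply (Rmult_le_compat_r (2^N)) in H; [|apply Rlt_le, pow2_pos].
    unfold Rdiv in H. rewrite Rmult_assoc, Rinv_l in H. lra. apply Rgt_not_eq, pow2_pos. }
  destruct Hc as [[H1 H2]|[H1 H2]].
  - exists (2 ^ n). intros x Hx.
    assert (H1' : 2 * INR q * INR d <= INR i).
    { replace (2 * INR q * INR d) with (INR (2*q*d)) by (rewrite !mult_INR; simpl; ring). apply le_INR; lia. }
    assert (H2' : INR i + 1 <= 2 * INR q * INR d + INR d).
    { replace (2 * INR q * INR d + INR d) with (INR (2*q*d + d)) by (rewrite plus_INR, !mult_INR; simpl; ring).
      replace (INR i + 1) with (INR (i+1)) by (rewrite plus_INR; simpl; ring). apply le_INR; lia. }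
    clear H1 H2.
    assert (A1 : INR q <= INR i / (2 * INR d)).
    { apply (Rmult_le_reg_r (2 * INR d)); [lra|]. unfold Rdiv. rewrite Rmult_assoc, Rinv_l; [nra|lra]. }
    assert (A2 : INR (i+1) / (2 * INR d) <= INR q + /2).
    { rewrite ?plus_INR. apply (Rmult_le_reg_r (2 * INR d)); [lra|]. unfold Rdiv. rewrite Rmult_assoc, Rinv_l; [|lra]. simpl. nra. }
    assert (Hi : INR i / 2 ^ N <= INR (i+1) / 2 ^ N).
    { unfold Rdiv. apply Rmult_le_compat_r. apply Rlt_le, Rinv_0_lt_compat, pow2_pos. apply le_INR; lia. }
    pose proof (Hx1 x (proj1 Hx)). pose proof (Hx2 x (proj2 Hx)).
    pose proof (Hx1 _ (Rle_refl _)). pose proof (Hx2 _ Hi).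
    rewrite (T_left (Z.of_nat q) (2 ^ n * x)) by (rewrite Hq; lra).
    rewrite (T_left (Z.of_nat q) (2 ^ n * (INR i / 2 ^ N))) by (rewrite Hq; lra). ring.
  - exists (- 2 ^ n). intros x Hx.
    assert (H1' : (2 * INR q + 1) * INR d <= INR i).
    { replace ((2 * INR q + 1) * INR d) with (INR ((2*q+1)*d)) by (rewrite !mult_INR, plus_INR, mult_INR; simpl; ring). apply le_INR; lia. }
    assert (H2' : INR i + 1 <= (2 * INR q + 2) * INR d).
    { replace ((2 * INR q + 2) * INR d) with (INR ((2*q+2)*d)) by (rewrite !mult_INR, plus_INR, mult_INR; simpl; ring).
      replace (INR i + 1) with (INR (i+1)) by (rewrite plus_INR; simpl; ring). apply le_INR; lia. }
    clear H1 H2.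
    assert (A1 : INR q + /2 <= INR i / (2 * INR d)).
    { rewrite ?plus_INR. apply (Rmult_le_reg_r (2 * INR d)); [lra|]. unfold Rdiv. rewrite Rmult_assoc, Rinv_l; [|lra]. simpl. nra. }
    assert (A2 : INR (i+1) / (2 * INR d) <= INR q + 1).
    { rewrite ?plus_INR. apply (Rmult_le_reg_r (2 * INR d)); [lra|]. unfold Rdiv. rewrite Rmult_assoc, Rinv_l; [|lra]. simpl. nra. }
    assert (Hi : INR i / 2 ^ N <= INR (i+1) / 2 ^ N).
    { unfold Rdiv. apply Rmult_le_compat_r. apply Rlt_le, Rinv_0_lt_compat, pow2_pos. apply le_INR; lia. }
    pose proof (Hx1 x (proj1 Hx)). pose proof (Hx2 x (proj2 Hx)).
    pose proof (Hx1 _ (Rle_refl _)). pose proof (Hx2 _ Hi).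
    rewrite (T_right (Z.of_nat q) (2 ^ n * x)) by (rewrite Hq; lra).
    rewrite (T_right (Z.of_nat q) (2 ^ n * (INR i / 2 ^ N))) by (rewrite Hq; lra). ring.
Qed.

Lemma psum_aff N i : forall M, (M <= N)%nat ->
  exists sg : R, forall x, INR i / 2 ^ N <= x <= INR (i + 1) / 2 ^ N ->
    psum (fun n => term n x) M = psum (fun n => term n (INR i / 2 ^ N)) M + sg * (x - INR i / 2 ^ N).
Proof.
  induction M; intros HM.
  - exists 0. intros. simpl. ring.
  - destruct (IHM ltac:(lia)) as [s1 H1]. destruct (T_aff M N i ltac:(lia)) as [s2 H2].
    exists (s1 + c M * / 2 ^ M * s2). intros x Hx. simpl. rewrite H1 by exact Hx.
    unfold term. rewrite (H2 x Hx). ring.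
Qed.

Definition ptd (m i : nat) : R := INR i / 2 ^ m.

Lemma f_dyadic m i : f (ptd m i) = psum (fun n => term n (ptd m i)) m.
Proof.
  rewrite (f_split m). rewrite (tail_dyadic m _ (Z.of_nat i)). ring.
  unfold ptd. rewrite <- INR_IZR_INZ. field. apply Rgt_not_eq, pow2_pos.
Qed.

Lemma ptd_double m i : ptd (S m) (2 * i) = ptd m i.
Proof. unfold ptd. rewrite mult_INR. simpl. field. apply Rgt_not_eq, pow2_pos. Qed.

Lemma f_int i : f (INR i) = 0.
Proof.
  replace (INR i) with (ptd 0 i) by (unfold ptd; simpl; field).
  rewrite f_dyadic. reflexivity.
Qed.

Lemma MID m i : f (ptd (S m) (2 * i + 1)) = (f (ptd m i) + f (ptd m (i + 1))) / 2 + c m / 2 ^ (S m).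
Proof.
  set (a := ptd m i). set (b := ptd m (i+1)). set (mid := ptd (S m) (2*i+1)).
  assert (Hp := pow2_pos m).
  assert (Hmid : mid = a + / 2 ^ (S m)).
  { unfold mid, a, ptd. rewrite plus_INR, mult_INR. simpl. field. lra. }
  assert (Hb : b = a + / 2 ^ m).
  { unfold b, a, ptd. rewrite plus_INR. simpl. field. lra. }
  destruct (psum_aff m i m (le_n m)) as [sg Hsg].
  fold (ptd m i) in Hsg. fold a in Hsg. fold (ptd m (i+1)) in Hsg. fold b in Hsg.
  assert (Hab : a <= mid <= b).
  { rewrite Hmid, Hb. simpl. pose proof (Rinv_0_lt_compat _ Hp). split.
    - assert (0 < / (2 * 2^m)) by (apply Rinv_0_lt_compat; lra). lra.
    - rewrite Rinv_mult. lra. }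
  assert (Hbb : a <= b <= b) by (rewrite Hb; pose proof (Rinv_0_lt_compat _ Hp); lra).
  assert (Fmid : f mid = psum (fun n => term n mid) (S m)) by (unfold mid; apply f_dyadic).
  assert (Fa : f a = psum (fun n => term n a) m) by (unfold a; apply f_dyadic).
  assert (Fb : f b = psum (fun n => term n b) m) by (unfold b; apply f_dyadic).
  rewrite Fmid, Fa, Fb. simpl psum.
  rewrite (Hsg mid Hab), (Hsg b Hbb).
  assert (Tm : term m mid = c m / 2 ^ m * / 2).
  { unfold term. replace (2 ^ m * mid) with (IZR (Z.of_nat i) + /2).
    2:{ rewrite Hmid. unfold a, ptd. rewrite <- INR_IZR_INZ. simpl. field. lra. }
    rewrite (T_left (Z.of_nat i)) by lra. field. lra. }
  rewrite Tm. rewrite Hmid, Hb. simpl. field. lra.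
Qed.

Definition D (m i : nat) : R := 2 ^ m * (f (ptd m (i + 1)) - f (ptd m i)).

Lemma D_even m i : D (S m) (2 * i) = D m i + c m.
Proof.
  unfold D. replace (2 * i + 1)%nat with (2 * i + 1)%nat by lia.
  rewrite MID, ptd_double. simpl. field. apply Rgt_not_eq, pow2_pos.
Qed.

Lemma D_odd m i : D (S m) (2 * i + 1) = D m i - c m.
Proof.
  unfold D. replace (2 * i + 1 + 1)%nat with (2 * (i + 1))%nat by lia.
  rewrite MID, ptd_double. simpl. field. apply Rgt_not_eq, pow2_pos.
Qed.

Lemma D_zero i : D 0 i = 0.
Proof.
  unfold D. unfold ptd. simpl. rewrite !Rdiv_1_r, f_int, f_int. ring.
Qed.

Lemma D_bound m i : Rabs (D m i) <= INR m.
Proof.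
  revert i. induction m; intros i.
  - rewrite D_zero, Rabs_R0. simpl. lra.
  - rewrite S_INR. pose proof (c_pos m). pose proof (c_le1 m).
    destruct (Nat.Even_or_Odd i) as [[k Hk]|[k Hk]]; subst i.
    + rewrite D_even. pose proof (IHm k). pose proof (Rabs_triang (D m k) (c m)).
      rewrite (Rabs_right (c m)) in H2 by lra. lra.
    + rewrite D_odd. pose proof (IHm k). pose proof (Rabs_triang (D m k) (- c m)).
      rewrite Rabs_Ropp, (Rabs_right (c m)) in H2 by lra. unfold Rminus. lra.
Qed.

Lemma D_shift m u : forall e, Rabs (D (e + m) (2 ^ e * u) - D m u) <= INR e.
Proof.
  induction e.
  - simpl. replace (u + 0)%nat with u by lia. unfold Rminus. rewrite Rplus_opp_r, Rabs_R0. lra.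
  - rewrite S_INR. replace (S e + m)%nat with (S (e + m)) by lia.
    replace (2 ^ S e * u)%nat with (2 * (2 ^ e * u))%nat by (simpl; lia).
    rewrite D_even. pose proof (c_pos (e+m)). pose proof (c_le1 (e+m)).
    replace (D (e + m) (2 ^ e * u) + c (e + m) - D m u) with ((D (e + m) (2 ^ e * u) - D m u) + c (e+m)) by ring.
    pose proof (Rabs_triang (D (e + m) (2 ^ e * u) - D m u) (c (e+m))).
    rewrite (Rabs_right (c (e+m))) in H1 by lra. lra.
Qed.

Lemma psum_pairs (g : nat -> R) K : psum g (2 * K) = psum (fun i => g (2 * i)%nat + g (2 * i + 1)%nat) K.
Proof.
  induction K.
  - reflexivity.
  - replace (2 * S K)%nat with (S (S (2 * K))) by lia. cbn [psum]. rewrite IHK.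
    replace (S (2 * K)) with (2 * K + 1)%nat by lia. ring.
Qed.

Lemma psum_ext (g h : nat -> R) K : (forall i, (i < K)%nat -> g i = h i) -> psum g K = psum h K.
Proof.
  induction K; intros H; simpl. reflexivity. rewrite IHK by (intros; apply H; lia). rewrite H by lia. reflexivity.
Qed.

Lemma psum_plus (g h : nat -> R) K : psum (fun i => g i + h i) K = psum g K + psum h K.
Proof. induction K; simpl. ring. rewrite IHK. ring. Qed.

Lemma psum_scal (g : nat -> R) a K : psum (fun i => a * g i) K = a * psum g K.
Proof. induction K; simpl. ring. rewrite IHK. ring. Qed.

Lemma psum_const a K : psum (fun _ => a) K = INR K * a.
Proof. induction K; simpl psum. simpl. ring. rewrite IHK, S_INR. ring. Qed.

Lemma psum_le (g h : nat -> R) K : (forall i, (i < K)%nat -> g i <= h i) -> psum g K <= psum h K.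
Proof.
  induction K; intros H; simpl. lra. pose proof (H K ltac:(lia)). pose proof (IHK ltac:(intros; apply H; lia)). lra.
Qed.

Lemma SQ m : psum (fun i => D m i * D m i) (2 ^ m) = 2 ^ m * psum (fun n => c n * c n) m.
Proof.
  induction m.
  - simpl. rewrite D_zero. ring.
  - replace (2 ^ S m)%nat with (2 * 2 ^ m)%nat by (simpl; lia).
    rewrite psum_pairs.
    rewrite (psum_ext _ (fun i => 2 * (D m i * D m i) + 2 * (c m * c m))).
    + rewrite psum_plus, psum_scal, psum_const, IHm, INR_pow2. simpl. ring.
    + intros i _. rewrite D_even, D_odd. ring.
Qed.

Definition cc (n : nat) : R := c n * c n.

Lemma cc_nonneg n : 0 <= cc n.
Proof. unfold cc. pose proof (c_pos n). nra. Qed.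

Lemma psum_app (g : nat -> R) A B : psum g (A + B) = psum g A + psum (fun t => g (A + t)%nat) B.
Proof.
  induction B.
  - simpl. replace (A + 0)%nat with A by lia. ring.
  - replace (A + S B)%nat with (S (A + B)) by lia. cbn [psum]. rewrite IHB. ring.
Qed.

Lemma psum_nonneg (g : nat -> R) K : (forall i, 0 <= g i) -> 0 <= psum g K.
Proof. intros H. induction K; simpl. lra. pose proof (H K). lra. Qed.

Lemma psum_mono (g : nat -> R) K L : (forall i, 0 <= g i) -> (K <= L)%nat -> psum g K <= psum g L.
Proof.
  intros H HKL. replace L with (K + (L - K))%nat by lia. rewrite psum_app.
  pose proof (psum_nonneg (fun t => g (K + t)%nat) (L - K) ltac:(intros; apply H)). lra.
Qed.

Lemma cc_block J t : (t < 2 ^ J)%nat -> cc (2 ^ J - 1 + t) = / (2 ^ J * ((INR J + 1) * (INR J + 1))).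
Proof.
  intros Ht. unfold cc. rewrite c_sq. unfold jb.
  assert (0 < 2 ^ J)%nat by (apply Nat.neq_0_lt_0, Nat.pow_nonzero; lia).
  rewrite (Nat.log2_unique (S (2 ^ J - 1 + t)) J); [reflexivity|lia|].
  simpl. lia.
Qed.

Lemma psum_cc_pow J : psum cc (2 ^ J - 1) <= 3 - 2 / (INR J + 1).
Proof.
  induction J.
  - simpl. lra.
  - assert (0 < 2 ^ J)%nat by (apply Nat.neq_0_lt_0, Nat.pow_nonzero; lia).
    replace (2 ^ S J - 1)%nat with ((2 ^ J - 1) + 2 ^ J)%nat by (simpl; lia).
    rewrite psum_app. rewrite (psum_ext (fun t => cc (2 ^ J - 1 + t)%nat) (fun _ => / (2 ^ J * ((INR J + 1) * (INR J + 1))))).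
    2:{ intros t Ht. apply cc_block; exact Ht. }
    rewrite psum_const, INR_pow2. rewrite S_INR.
    pose proof (pos_INR J). pose proof (pow2_pos J).
    replace (2 ^ J * / (2 ^ J * ((INR J + 1) * (INR J + 1)))) with (/ ((INR J + 1) * (INR J + 1))) by (field; lra).
    assert (/ ((INR J + 1) * (INR J + 1)) <= 2 / (INR J + 1) - 2 / (INR J + 1 + 1)).
    { set (x := INR J + 1). assert (1 <= x) by (unfold x; lra).
      assert (E : 2 / x - 2 / (x + 1) - / (x * x) = (x - 1) / (x * x * (x + 1))) by (field; lra).
      assert (0 <= (x - 1) / (x * x * (x + 1))).
      { apply Rmult_le_pos. lra. apply Rlt_le, Rinv_0_lt_compat. nra. }
      lra. }
    lra.
Qed.

Lemma psum_cc_bound N : psum cc N <= 3.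
Proof.
  apply Rle_trans with (psum cc (2 ^ N - 1)).
  - apply psum_mono. apply cc_nonneg.
    assert (N < 2 ^ N)%nat by (apply Nat.pow_gt_lin_r; lia). lia.
  - pose proof (psum_cc_pow N). pose proof (pos_INR N).
    assert (0 < 2 / (INR N + 1)) by (apply Rdiv_lt_0_compat; lra). lra.
Qed.

Definition g (t : R) : pt := (t, f t).

Lemma dist_le_sum (p q : pt) : Defs.dist p q <= Rabs (fst p - fst q) + Rabs (snd p - snd q).
Proof.
  unfold Defs.dist. rewrite <- (sqrt_square (Rabs (fst p - fst q) + Rabs (snd p - snd q))).
  - apply sqrt_le_1_alt. pose proof (Rabs_pos (fst p - fst q)). pose proof (Rabs_pos (snd p - snd q)).
    pose proof (Rsqr_abs (fst p - fst q)). pose proof (Rsqr_abs (snd p - snd q)). unfold Rsqr in *. simpl. nra.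
  - pose proof (Rabs_pos (fst p - fst q)). pose proof (Rabs_pos (snd p - snd q)). lra.
Qed.

Lemma ptd_step N i : ptd N (i + 1) = ptd N i + / 2 ^ N.
Proof. unfold ptd. rewrite plus_INR. simpl. field. apply Rgt_not_eq, pow2_pos. Qed.

Lemma osc N i x y : ptd N i <= x <= ptd N (i + 1) -> ptd N i <= y <= ptd N (i + 1) ->
  Rabs (f x - f y) <= (Rabs (D N i) + 1) / 2 ^ N.
Proof.
  intros Hx Hy. destruct (psum_aff N i N (le_n N)) as [sg Hsg].
  fold (ptd N i) (ptd N (i+1)) in Hsg.
  pose proof (pow2_pos N) as Hp.
  assert (Hb : ptd N i <= ptd N (i+1) <= ptd N (i+1)) by (rewrite ptd_step; pose proof (Rinv_0_lt_compat _ Hp); lra).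
  assert (HD : D N i = 2 ^ N * (sg / 2 ^ N)).
  { unfold D. rewrite (f_dyadic N (i+1)), (f_dyadic N i), (Hsg _ Hb), ptd_step. field. lra. }
  assert (HD' : sg = D N i) by (rewrite HD; field; lra).
  rewrite (f_split N x), (f_split N y), (Hsg x Hx), (Hsg y Hy).
  pose proof (tail_bounds N x). pose proof (tail_bounds N y).
  rewrite ptd_step in Hx, Hy.
  replace (psum (fun n : nat => term n (ptd N i)) N + sg * (x - ptd N i) + tail N x -
     (psum (fun n : nat => term n (ptd N i)) N + sg * (y - ptd N i) + tail N y))
    with (sg * (x - y) + (tail N x - tail N y)) by ring.
  eapply Rle_trans. apply Rabs_triang. rewrite Rabs_mult.
  assert (Rabs (x - y) <= / 2 ^ N) by (apply Rabs_le; lra).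
  assert (Rabs (tail N x - tail N y) <= / 2 ^ N) by (apply Rabs_le; lra).
  rewrite <- HD'. pose proof (Rabs_pos sg).
  apply Rle_trans with (Rabs sg * / 2 ^ N + / 2 ^ N). 
  - apply Rplus_le_compat; [apply Rmult_le_compat_l|]; lra.
  - right. field. lra.
Qed.

Lemma find_cell K y : (1 <= K)%nat -> 0 <= y <= INR K -> exists i, (i < K)%nat /\ INR i <= y <= INR i + 1.
Proof.
  induction K; intros HK Hy. lia.
  destruct (Nat.eq_dec K 0) as [->|HK0].
  - exists 0%nat. simpl in *. split; [lia|lra].
  - destruct (Rle_dec y (INR K)) as [Hle|Hgt].
    + destruct (IHK ltac:(lia) ltac:(lra)) as [i [Hi1 Hi2]]. exists i. split; [lia|lra].
    + exists K. rewrite S_INR in Hy. split; [lia|lra].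
Qed.

Lemma pick_N (delta : R) : delta > 0 -> exists N, (INR N + 2) / 2 ^ N <= delta.
Proof.
  intros Hd.
  assert (Hpow : forall t, INR t + 1 <= 2 ^ t).
  { induction t. simpl. lra. rewrite S_INR. simpl. pose proof (pow2_pos t). pose proof (pos_INR t). lra. }
  destruct (archimed (2 / delta)) as [H1 _].
  set (t := Z.to_nat (up (2 / delta))).
  assert (Ht : 2 / delta <= INR t + 1).
  { unfold t. destruct (Z.le_gt_cases 0 (up (2/delta))) as [Hz|Hz].
    - rewrite INR_IZR_INZ, Znat.Z2Nat.id by exact Hz. lra.
    - assert (0 < 2 / delta) by (apply Rdiv_lt_0_compat; lra).
      apply IZR_lt in Hz. lra. }
  exists (2 * t)%nat. rewrite pow_mult. replace ((2:R)^2) with 4 by ring.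
  assert (E4 : 4 ^ t = 2 ^ t * 2 ^ t) by (rewrite <- Rpow_mult_distr; f_equal; ring).
  rewrite E4. pose proof (Hpow t). pose proof (pos_INR t). rewrite mult_INR. simpl INR.
  apply (Rmult_le_reg_r (2 ^ t * 2 ^ t)). nra.
  unfold Rdiv. rewrite Rmult_assoc, Rinv_l by nra. rewrite Rmult_1_r.
  assert (2 <= delta * (INR t + 1)).
  { apply (Rmult_le_compat_l delta) in Ht; [|lra]. unfold Rdiv in Ht.
    rewrite <- Rmult_assoc, (Rmult_comm delta 2), Rmult_assoc, Rinv_r, Rmult_1_r in Ht; lra. }
  nra.
Qed.

Lemma psum_lip N s t : Rabs (psum (fun n => term n s) N - psum (fun n => term n t) N) <= INR N * Rabs (s - t).
Proof.
  induction N.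
  - simpl. rewrite Rminus_0_r, Rabs_R0. lra.
  - cbn [psum]. rewrite S_INR.
    replace (psum (fun n : nat => term n s) N + term N s - (psum (fun n : nat => term n t) N + term N t))
      with ((psum (fun n : nat => term n s) N - psum (fun n : nat => term n t) N) + (term N s - term N t)) by ring.
    eapply Rle_trans. apply Rabs_triang.
    assert (Rabs (term N s - term N t) <= Rabs (s - t)).
    { unfold term. replace (c N * / 2 ^ N * T (2 ^ N * s) - c N * / 2 ^ N * T (2 ^ N * t))
        with (c N * / 2 ^ N * (T (2 ^ N * s) - T (2 ^ N * t))) by ring.
      rewrite Rabs_mult. pose proof (T_lip (2^N*s) (2^N*t)).
      replace (2 ^ N * s - 2 ^ N * t) with (2^N * (s - t)) in H by ring.
      rewrite Rabs_mult, (Rabs_right (2^N)) in H by (apply Rle_ge, Rlt_le, pow2_pos).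
      pose proof (c_pos N). pose proof (c_le1 N). pose proof (pow2_pos N).
      rewrite Rabs_right by (apply Rle_ge, Rmult_le_pos; [lra|apply Rlt_le, Rinv_0_lt_compat; lra]).
      apply Rle_trans with (c N * / 2 ^ N * (2 ^ N * Rabs (s - t))).
      - apply Rmult_le_compat_l; [apply Rmult_le_pos; [lra|apply Rlt_le, Rinv_0_lt_compat; lra]|lra].
      - replace (c N * / 2 ^ N * (2 ^ N * Rabs (s - t))) with (c N * Rabs (s - t)) by (field; lra).
        pose proof (Rabs_pos (s - t)). nra. }
    lra.
Qed.

Theorem g_cont : continuous_on_01 g.
Proof.
  intros t Ht eps Heps.
  destruct (pick_N (eps / 2) ltac:(lra)) as [N HN].
  pose proof (pos_INR N). pose proof (pow2_pos N).
  assert (Hinv : / 2 ^ N <= eps / 2).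
  { apply Rle_trans with ((INR N + 2) / 2 ^ N); [|exact HN].
    unfold Rdiv. rewrite <- (Rmult_1_l (/ 2^N)) at 1. apply Rmult_le_compat_r. apply Rlt_le, Rinv_0_lt_compat; lra. lra. }
  exists (eps / (2 * (INR N + 1))). split.
  - apply Rdiv_lt_0_compat; lra.
  - intros s Hs Hst. eapply Rle_lt_trans. apply dist_le_sum. unfold g; simpl.
    rewrite (f_split N s), (f_split N t).
    pose proof (tail_bounds N s). pose proof (tail_bounds N t).
    pose proof (psum_lip N s t).
    replace (psum (fun n : nat => term n s) N + tail N s - (psum (fun n : nat => term n t) N + tail N t))
      with ((psum (fun n : nat => term n s) N - psum (fun n : nat => term n t) N) + (tail N s - tail N t)) by ring.
    pose proof (Rabs_triang (psum (fun n : nat => term n s) N - psum (fun n : nat => term n t) N) (tail N s - tail N t)).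
    assert (Rabs (tail N s - tail N t) <= / 2 ^ N) by (apply Rabs_le; lra).
    assert (Hd : (INR N + 1) * Rabs (s - t) < eps / 2).
    { apply (Rmult_lt_compat_l (INR N + 1)) in Hst; [|lra].
      replace ((INR N + 1) * (eps / (2 * (INR N + 1)))) with (eps / 2) in Hst by (field; lra). exact Hst. }
    nra.
Qed.

Theorem g_H1 : H1_finite (image01 g).
Proof.
  exists 4. intros delta Hdelta.
  destruct (pick_N delta Hdelta) as [N HN].
  set (K := (2 ^ N)%nat).
  assert (HK : (0 < K)%nat) by (unfold K; apply Nat.neq_0_lt_0, Nat.pow_nonzero; lia).
  pose proof (pow2_pos N) as Hp.
  exists (fun n z => (n < K)%nat /\ exists x, ptd N n <= x <= ptd N (n + 1) /\ z = g x).
  exists (fun n => if Nat.ltb n K then (Rabs (D N n) + 2) / 2 ^ N else 0).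
  split; [|split; [|split]].
  - intros z [t [Ht ->]].
    destruct (find_cell K (t * 2 ^ N) HK) as [i [Hi1 Hi2]].
    { unfold K. rewrite INR_pow2. split. nra. nra. }
    exists i. split; [exact Hi1|]. exists t. split; [|reflexivity].
    unfold ptd. rewrite plus_INR. simpl INR. split.
    + apply (Rmult_le_reg_r (2 ^ N)); [lra|]. unfold Rdiv. rewrite Rmult_assoc, Rinv_l; lra.
    + apply (Rmult_le_reg_r (2 ^ N)); [lra|]. unfold Rdiv. rewrite Rmult_assoc, Rinv_l; lra.
  - intros n. destruct (Nat.ltb n K); [|lra]. split.
    + apply Rdiv_le_0_compat; [pose proof (Rabs_pos (D N n)); lra|exact Hp].
    + apply Rle_trans with ((INR N + 2) / 2 ^ N); [|exact HN].
      unfold Rdiv. apply Rmult_le_compat_r. apply Rlt_le, Rinv_0_lt_compat; lra.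
      pose proof (D_bound N n). lra.
  - intros n x y [Hn [x1 [Hx1 ->]]] [_ [y1 [Hy1 ->]]].
    apply Nat.ltb_lt in Hn. rewrite Hn.
    eapply Rle_trans. apply dist_le_sum. unfold g; simpl.
    pose proof (osc N n x1 y1 Hx1 Hy1). rewrite ptd_step in Hx1, Hy1.
    assert (Rabs (x1 - y1) <= / 2 ^ N) by (apply Rabs_le; lra).
    apply Rle_trans with (/ 2 ^ N + (Rabs (D N n) + 1) / 2 ^ N); [lra|].
    right. field. lra.
  - intros M.
    set (d := fun n => if Nat.ltb n K then (Rabs (D N n) + 2) / 2 ^ N else 0).
    assert (Hd0 : forall n, 0 <= d n).
    { intros n. unfold d. destruct (Nat.ltb n K); [|lra].
      apply Rdiv_le_0_compat; [pose proof (Rabs_pos (D N n)); lra|exact Hp]. }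
    assert (Hsum : forall M', sum_f_R0 d M' = psum d (S M')).
    { induction M'. simpl. ring. simpl sum_f_R0. rewrite IHM'. reflexivity. }
    change (sum_f_R0 d M <= 4). rewrite Hsum.
    assert (Hz : forall L, psum d (K + L) = psum d K).
    { induction L. rewrite Nat.add_0_r. reflexivity.
      replace (K + S L)%nat with (S (K + L)) by lia. cbn [psum]. rewrite IHL.
      unfold d at 2. replace (Nat.ltb (K + L) K) with false. ring.
      symmetry. apply Nat.ltb_ge. lia. }
    apply Rle_trans with (psum d K).
    { apply Rle_trans with (psum d (K + S M)). apply psum_mono; [exact Hd0|lia]. rewrite Hz. lra. }
    apply Rle_trans with (psum (fun i => (2 + (1 + D N i * D N i) / 2) / 2 ^ N) K).
    { apply psum_le. intros i Hi. unfold d. replace (Nat.ltb i K) with true by (symmetry; apply Nat.ltb_lt; exact Hi).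
      unfold Rdiv. apply Rmult_le_compat_r. apply Rlt_le, Rinv_0_lt_compat; lra.
      pose proof (Rabs_pos (D N i)).
      assert (Rabs (D N i) * Rabs (D N i) = D N i * D N i).
      { rewrite <- Rabs_mult. apply Rabs_right. apply Rle_ge, Rle_0_sqr. }
      pose proof (Rle_0_sqr (Rabs (D N i) - 1)). unfold Rsqr in *. nra. }
    rewrite (psum_ext _ (fun i => / 2 ^ N * (5 / 2) + / 2 ^ N * / 2 * (D N i * D N i))).
    2:{ intros i _. field. lra. }
    rewrite psum_plus, psum_const, psum_scal. unfold K. rewrite SQ, INR_pow2.
    pose proof (psum_cc_bound N). unfold cc in H.
    replace (2 ^ N * (/ 2 ^ N * (5 / 2)) + / 2 ^ N * / 2 * (2 ^ N * psum (fun n : nat => c n * c n) N))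
      with (5 / 2 + psum (fun n : nat => c n * c n) N / 2) by (field; lra).
    lra.
Qed.

Lemma Rsup_ub (P : R -> Prop) x : bound P -> P x -> x <= Rsup P.
Proof.
  intros Hb Hx. unfold Rsup. destruct (excluded_middle_informative _) as [h|h].
  - destruct (completeness P (proj1 h) (proj2 h)) as [m [Hm1 Hm2]]. simpl. apply Hm1. exact Hx.
  - exfalso. apply h. split; [exact Hb|exists x; exact Hx].
Qed.

Lemma Rsup_le (P : R -> Prop) b : (forall x, P x -> x <= b) -> (exists x, P x) -> Rsup P <= b.
Proof.
  intros Hb Hx. unfold Rsup. destruct (excluded_middle_informative _) as [h|h].
  - destruct (completeness P (proj1 h) (proj2 h)) as [m [Hm1 Hm2]]. simpl. apply Hm2. exact Hb.
  - exfalso. apply h. split; [exists b; exact Hb|exact Hx].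
Qed.

Lemma Rsup_nonneg (P : R -> Prop) : (forall x, P x -> 0 <= x) -> 0 <= Rsup P.
Proof.
  intros H. unfold Rsup. destruct (excluded_middle_informative _) as [h|h]; [|lra].
  destruct (completeness P (proj1 h) (proj2 h)) as [m [Hm1 Hm2]]. simpl.
  destruct (proj2 h) as [x Hx]. apply Rle_trans with x. apply H, Hx. apply Hm1, Hx.
Qed.

Lemma Rinf_ge (P : R -> Prop) b : (forall x, P x -> b <= x) -> (exists x, P x) -> b <= Rinf P.
Proof.
  intros Hb [x Hx]. unfold Rinf.
  assert (Rsup (fun y => P (- y)) <= - b).
  { apply Rsup_le. intros y Hy. pose proof (Hb _ Hy). lra. exists (- x). rewrite Ropp_involutive. exact Hx. }
  lra.
Qed.

Lemma Rinf_le (P : R -> Prop) x : (forall y, P y -> 0 <= y) -> P x -> Rinf P <= x.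
Proof.
  intros H0 Hx. unfold Rinf.
  assert (- x <= Rsup (fun y => P (- y))).
  { apply Rsup_ub. exists 0. intros y Hy. pose proof (H0 _ Hy). lra. rewrite Ropp_involutive. exact Hx. }
  lra.
Qed.

Definition dot (a b : pt) : R := fst a * fst b + snd a * snd b.
Definition crs (a b : pt) : R := fst a * snd b - snd a * fst b.
Definition sub (a b : pt) : pt := (fst a - fst b, snd a - snd b).

Lemma dist_sub x y : Defs.dist x y = sqrt (dot (sub x y) (sub x y)).
Proof. unfold Defs.dist, dot, sub. simpl. f_equal. ring. Qed.

Lemma dist_nonneg x y : 0 <= Defs.dist x y.
Proof. apply sqrt_pos. Qed.

Lemma dot_self_nonneg a : 0 <= dot a a.
Proof. unfold dot. pose proof (Rle_0_sqr (fst a)). pose proof (Rle_0_sqr (snd a)). unfold Rsqr in *. lra. Qed.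

Lemma dist_sq x y : Defs.dist x y * Defs.dist x y = dot (sub x y) (sub x y).
Proof. rewrite dist_sub. apply sqrt_sqrt. apply dot_self_nonneg. Qed.

Lemma dist_sym x y : Defs.dist x y = Defs.dist y x.
Proof. unfold Defs.dist. f_equal. ring. Qed.

Lemma dist_self x : Defs.dist x x = 0.
Proof. unfold Defs.dist. replace ((fst x - fst x) ^ 2 + (snd x - snd x) ^ 2) with 0 by ring. apply sqrt_0. Qed.

Lemma abs_le_of_sq a b : 0 <= b -> a * a <= b * b -> Rabs a <= b.
Proof.
  intros Hb H. destruct (Rle_dec 0 a).
  - rewrite Rabs_right by lra. nra.
  - rewrite Rabs_left by lra. nra.
Qed.

Lemma dot_le a b : Rabs (dot a b) <= sqrt (dot a a) * sqrt (dot b b).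
Proof.
  apply abs_le_of_sq. apply Rmult_le_pos; apply sqrt_pos.
  replace (sqrt (dot a a) * sqrt (dot b b) * (sqrt (dot a a) * sqrt (dot b b)))
    with ((sqrt (dot a a) * sqrt (dot a a)) * (sqrt (dot b b) * sqrt (dot b b))) by ring.
  rewrite !sqrt_sqrt by apply dot_self_nonneg. unfold dot.
  pose proof (Rle_0_sqr (fst a * snd b - snd a * fst b)). unfold Rsqr in *. nra.
Qed.

Lemma crs_le a b : Rabs (crs a b) <= sqrt (dot a a) * sqrt (dot b b).
Proof.
  apply abs_le_of_sq. apply Rmult_le_pos; apply sqrt_pos.
  replace (sqrt (dot a a) * sqrt (dot b b) * (sqrt (dot a a) * sqrt (dot b b)))
    with ((sqrt (dot a a) * sqrt (dot a a)) * (sqrt (dot b b) * sqrt (dot b b))) by ring.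
  rewrite !sqrt_sqrt by apply dot_self_nonneg. unfold dot, crs.
  pose proof (Rle_0_sqr (fst a * fst b + snd a * snd b)). unfold Rsqr in *. nra.
Qed.

Lemma dist_triang x y z : Defs.dist x z <= Defs.dist x y + Defs.dist y z.
Proof.
  pose proof (dist_nonneg x y). pose proof (dist_nonneg y z). pose proof (dist_nonneg x z).
  assert (Hs : Rabs (Defs.dist x z) <= Defs.dist x y + Defs.dist y z).
  { apply abs_le_of_sq. lra.
    pose proof (dot_le (sub x y) (sub y z)). rewrite <- !dist_sub in H2.
    rewrite (dist_sq x z).
    replace (dot (sub x z) (sub x z)) with (dot (sub x y) (sub x y) + dot (sub y z) (sub y z) + 2 * dot (sub x y) (sub y z))
      by (unfold dot, sub; simpl; ring).
    replace ((Defs.dist x y + Defs.dist y z) * (Defs.dist x y + Defs.dist y z)) with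
      (Defs.dist x y * Defs.dist x y + Defs.dist y z * Defs.dist y z + 2 * (Defs.dist x y * Defs.dist y z)) by ring.
    rewrite !dist_sq. pose proof (Rle_abs (dot (sub x y) (sub y z))). lra. }
  rewrite Rabs_right in Hs by lra. exact Hs.
Qed.

Lemma diam_nonneg E : 0 <= diam E.
Proof. unfold diam. apply Rsup_nonneg. intros d [x [y [_ [_ ->]]]]. apply dist_nonneg. Qed.

Lemma diam_ball_le x0 R : 0 < R -> diam (cball x0 R) <= 2 * R.
Proof.
  intros HR. unfold diam. apply Rsup_le.
  - intros d [x [y [Hx [Hy ->]]]]. unfold cball in Hx, Hy.
    pose proof (dist_triang x x0 y). rewrite (dist_sym x x0) in H. lra.
  - exists 0. exists x0, x0. unfold cball. rewrite dist_self. repeat split; lra.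
Qed.

Lemma diam_ball_ge x0 R : 0 < R -> R <= diam (cball x0 R).
Proof.
  intros HR. unfold diam. apply Rsup_ub.
  - exists (2 * R). intros d [x [y [Hx [Hy ->]]]]. unfold cball in Hx, Hy.
    pose proof (dist_triang x x0 y). rewrite (dist_sym x x0) in H. lra.
  - set (y := (fst x0 + R, snd x0)).
    assert (Hd : Defs.dist x0 y = R).
    { unfold Defs.dist, y. cbn [fst snd]. replace ((fst x0 - (fst x0 + R)) ^ 2 + (snd x0 - snd x0) ^ 2) with (R * R) by ring.
      apply sqrt_square. lra. }
    exists x0, y. unfold cball. rewrite dist_self, Hd. repeat split; lra.
Qed.

Lemma dot_pos_of_neq v : v <> (0, 0) -> 0 < dot v v.
Proof.
  intros Hv. destruct v as [v1 v2]. unfold dot. simpl.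
  destruct (Req_dec v1 0) as [->|H1].
  - destruct (Req_dec v2 0) as [->|H2]. exfalso; apply Hv; reflexivity.
    pose proof (Rsqr_pos_lt v2 H2). unfold Rsqr in *. lra.
  - pose proof (Rsqr_pos_lt v1 H1). pose proof (Rle_0_sqr v2). unfold Rsqr in *. lra.
Qed.

Lemma dist_set_lb x (L : pt -> Prop) p v :
  (forall z, L z <-> exists t : R, z = (fst p + t * fst v, snd p + t * snd v)) ->
  Rabs (crs (sub x p) v) <= dist_set x L * sqrt (dot v v).
Proof.
  intros HL. destruct (Req_dec (sqrt (dot v v)) 0) as [Hz|Hnz].
  - assert (dot v v = 0).
    { pose proof (sqrt_sqrt (dot v v) (dot_self_nonneg v)). rewrite Hz in H. lra. }
    pose proof (crs_le (sub x p) v). rewrite H, sqrt_0 in H0. rewrite Rmult_0_r in H0.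
    rewrite Hz. lra.
  - pose proof (sqrt_pos (dot v v)) as Hp.
    assert (Hnv : 0 < sqrt (dot v v)) by lra.
    assert (Rabs (crs (sub x p) v) / sqrt (dot v v) <= dist_set x L).
    { unfold dist_set. apply Rinf_ge.
      - intros d [y [Hy ->]]. apply HL in Hy. destruct Hy as [t ->].
        pose proof (crs_le (sub x (fst p + t * fst v, snd p + t * snd v)) v).
        rewrite <- dist_sub in H.
        replace (crs (sub x (fst p + t * fst v, snd p + t * snd v)) v) with (crs (sub x p) v) in H
          by (unfold crs, sub; simpl; ring).
        apply (Rmult_le_reg_r (sqrt (dot v v))); [lra|]. unfold Rdiv. rewrite Rmult_assoc, Rinv_l; lra.
      - exists (Defs.dist x p). exists p. split; [|reflexivity]. apply HL. exists 0.
        destruct p; simpl; f_equal; ring. }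
    apply (Rmult_le_compat_r (sqrt (dot v v))) in H; [|lra].
    unfold Rdiv in H. rewrite Rmult_assoc, Rinv_l, Rmult_1_r in H; lra.
Qed.

Lemma beta_lb (E : pt -> Prop) x0 R p1 p2 p3 s X :
  0 < R -> 0 < s -> E p1 -> E p2 -> E p3 ->
  Defs.dist x0 p1 <= R -> Defs.dist x0 p2 <= R -> Defs.dist x0 p3 <= R ->
  Defs.dist p1 p2 <= s -> Defs.dist p1 p3 <= s ->
  X <= Rabs (crs (sub p2 p1) (sub p3 p1)) ->
  X / (8 * s * R) <= beta E (cball x0 R).
Proof.
  intros HR Hs E1 E2 E3 D1 D2 D3 S12 S13 HX.
  unfold beta. destruct (excluded_middle_informative _) as [_|h].
  2:{ exfalso. apply h. exists p1. split; [exact E1|exact D1]. }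
  apply Rinf_ge.
  - intros b [L [[p [v [Hv HL]]] ->]].
    set (SL := fun s0 => exists x, E x /\ cball x0 R x /\ s0 = dist_set x L).
    assert (Hds0 : forall x y, L y -> 0 <= dist_set x L <= Defs.dist x y).
    { intros x y Hy. unfold dist_set. split.
      - apply Rinf_ge. intros d [y' [_ ->]]. apply dist_nonneg. exists (Defs.dist x y), y. split; auto.
      - apply Rinf_le. intros d [y' [_ ->]]. apply dist_nonneg. exists y. split; auto. }
    assert (Hp : L p) by (apply HL; exists 0; destruct p; simpl; f_equal; ring).
    assert (Hbd : bound SL).
    { exists (R + Defs.dist x0 p). intros d [x [Ex [Qx ->]]]. unfold cball in Qx.
      pose proof (Hds0 x p Hp). pose proof (dist_triang x x0 p). rewrite (dist_sym x x0) in H0. lra. }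
    set (W := Rsup SL).
    assert (HW : forall x, E x -> Defs.dist x0 x <= R -> dist_set x L <= W).
    { intros x Ex Qx. apply Rsup_ub. exact Hbd. exists x. repeat split; auto. }
    pose proof (dot_pos_of_neq v Hv) as Hvv.
    set (nv := sqrt (dot v v)).
    assert (Hnv : 0 < nv) by (apply sqrt_lt_R0; exact Hvv).
    assert (Hnv2 : nv * nv = dot v v) by (apply sqrt_sqrt; lra).
    assert (Hc : forall x, E x -> Defs.dist x0 x <= R -> Rabs (crs (sub x p) v) <= W * nv).
    { intros x Ex Qx. eapply Rle_trans. apply (dist_set_lb x L p v HL).
      apply Rmult_le_compat_r; [lra|]. apply HW; auto. }
    pose proof (Hc p1 E1 D1) as C1. pose proof (Hc p2 E2 D2) as C2. pose proof (Hc p3 E3 D3) as C3.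
    set (a := sub p2 p1). set (bb := sub p3 p1).
    assert (Id : crs a bb * dot v v = (crs (sub p2 p) v - crs (sub p1 p) v) * dot bb v - dot a v * (crs (sub p3 p) v - crs (sub p1 p) v)).
    { unfold a, bb, crs, dot, sub. simpl. ring. }
    assert (Ha : Rabs (dot a v) <= s * nv).
    { eapply Rle_trans. apply dot_le. unfold a. rewrite <- dist_sub. rewrite dist_sym.
      apply Rmult_le_compat_r; lra. }
    assert (Hb : Rabs (dot bb v) <= s * nv).
    { eapply Rle_trans. apply dot_le. unfold bb. rewrite <- dist_sub. rewrite dist_sym.
      apply Rmult_le_compat_r; lra. }
    assert (HW0 : 0 <= W) by (pose proof (Rabs_pos (crs (sub p1 p) v)); nra).
    assert (Hmain : Rabs (crs a bb) * (nv * nv) <= 4 * W * s * (nv * nv)).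
    { rewrite Hnv2. rewrite <- (Rabs_right (dot v v)) by lra. rewrite <- Rabs_mult, Id.
      eapply Rle_trans. apply Rabs_triang. rewrite Rabs_Ropp, !Rabs_mult.
      assert (Rabs (crs (sub p2 p) v - crs (sub p1 p) v) <= 2 * W * nv).
      { eapply Rle_trans. apply Rabs_triang. rewrite Rabs_Ropp. lra. }
      assert (Rabs (crs (sub p3 p) v - crs (sub p1 p) v) <= 2 * W * nv).
      { eapply Rle_trans. apply Rabs_triang. rewrite Rabs_Ropp. lra. }
      rewrite <- Hnv2.
      pose proof (Rabs_pos (crs (sub p2 p) v - crs (sub p1 p) v)).
      pose proof (Rabs_pos (crs (sub p3 p) v - crs (sub p1 p) v)).
      pose proof (Rabs_pos (dot bb v)). pose proof (Rabs_pos (dot a v)).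
      apply Rle_trans with (2 * W * nv * (s * nv) + s * nv * (2 * W * nv)).
      + apply Rplus_le_compat; apply Rmult_le_compat; lra.
      + rewrite Rabs_right by nra. right. ring. }
    assert (HX4 : X <= 4 * W * s).
    { assert (Rabs (crs a bb) <= 4 * W * s) by (apply (Rmult_le_reg_r (nv * nv)); nra). unfold a, bb in H. lra. }
    pose proof (diam_ball_le x0 R HR). pose proof (diam_ball_ge x0 R HR).
    set (dq := diam (cball x0 R)) in *.
    assert (Hdq : 0 < dq) by lra.
    apply Rle_trans with (W / (2 * R)).
    + apply (Rmult_le_reg_r (8 * s * R)). nra. unfold Rdiv.
      replace (X * / (8 * s * R) * (8 * s * R)) with X by (field; lra).
      replace (W * / (2 * R) * (8 * s * R)) with (4 * W * s) by (field; lra). lra.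
    + unfold Rdiv. apply Rmult_le_compat_l; [lra|]. apply Rinv_le_contravar; lra.
  - exists (Rsup (fun s0 => exists x, E x /\ cball x0 R x /\ s0 = dist_set x (fun z => exists t, z = (0 + t * 1, 0 + t * 0))) / diam (cball x0 R)).
    exists (fun z => exists t, z = (0 + t * 1, 0 + t * 0)). split; [|reflexivity].
    exists (0, 0), (1, 0). split. intros H. inversion H. lra.
    intros z. simpl. tauto.
Qed.

Lemma pow2m_nat n : pow2m (Z.of_nat n + 2) = / 2 ^ (n + 2).
Proof.
  unfold pow2m. rewrite powerRZ_neg'. f_equal.
  replace (Z.of_nat n + 2)%Z with (Z.of_nat (n + 2)) by lia.
  rewrite <- pow_powerRZ. reflexivity.
Qed.

Lemma dist_ge_fst p q : Rabs (fst p - fst q) <= Defs.dist p q.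
Proof.
  unfold Defs.dist. rewrite <- sqrt_Rsqr_abs. apply sqrt_le_1_alt.
  pose proof (Rle_0_sqr (snd p - snd q)). unfold Rsqr in *. simpl. lra.
Qed.

Lemma ptd_in01 m i : (i <= 2 ^ m)%nat -> 0 <= ptd m i <= 1.
Proof.
  intros H. unfold ptd. pose proof (pow2_pos m). split.
  - apply Rdiv_le_0_compat; [apply pos_INR|lra].
  - apply le_INR in H. rewrite INR_pow2 in H.
    apply (Rmult_le_reg_r (2^m)); [lra|]. unfold Rdiv. rewrite Rmult_assoc, Rinv_l; lra.
Qed.

Lemma ptd_shift m' e u : ptd (m' + e) (2 ^ e * u) = ptd m' u.
Proof.
  unfold ptd. rewrite mult_INR, INR_pow2, pow_add. field. split; apply Rgt_not_eq, pow2_pos.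
Qed.

Definition kap (A : R) (e : nat) : R := / (4 * A * (4 + INR e) * 2 ^ e).

Lemma term_lb (A r : R) (e m' u : nat) (x0 : pt) :
  A > 1 -> 0 < r ->
  (4 + INR e) * 4 <= (A - 1) * 2 ^ e ->
  (u < 2 ^ m')%nat -> D m' u * D m' u <= 4 ->
  Defs.dist (g (ptd m' u)) x0 < / 2 ^ (m' + 2) ->
  Rpower (kap A e * c (m' + e)) r * / 2 ^ (m' + 2) <= S_term (image01 g) A r (Z.of_nat m' + 2, x0)%Z.
Proof.
  intros HA Hr He Hu HD Hx0.
  remember (m' + e)%nat as m eqn:Hm. set (i := (2 ^ e * u)%nat). set (h := / 2 ^ m).
  assert (Hh : 0 < h) by (apply Rinv_0_lt_compat, pow2_pos).
  assert (Hh2 : h = / 2 ^ (m' + 2) * (4 / 2 ^ e)).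
  { unfold h. rewrite Hm, !pow_add. simpl. field. split; apply Rgt_not_eq, pow2_pos. }
  set (P1 := g (ptd m i)). set (P2 := g (ptd (S m) (2 * i + 1))). set (P3 := g (ptd m (i + 1))).
  set (Dm := D m i).
  assert (HDm : Rabs Dm <= 2 + INR e).
  { pose proof (D_shift m' u e). unfold Dm, i. rewrite Hm, Nat.add_comm.
    assert (Rabs (D m' u) <= 2) by (apply abs_le_of_sq; lra).
    pose proof (Rabs_triang (D (e + m') (2 ^ e * u) - D m' u) (D m' u)).
    replace (D (e + m') (2 ^ e * u) - D m' u + D m' u) with (D (e + m') (2 ^ e * u)) in H1 by field. lra. }
  pose proof (c_pos m) as Hc0. pose proof (c_le1 m) as Hc1.
  assert (Hx2 : ptd (S m) (2 * i + 1) = ptd m i + h / 2).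
  { unfold ptd, h. rewrite plus_INR, mult_INR. simpl. field. apply Rgt_not_eq, pow2_pos. }
  assert (Hx3 : ptd m (i + 1) = ptd m i + h) by (unfold h; apply ptd_step).
  assert (Hy3 : f (ptd m (i + 1)) = f (ptd m i) + Dm * h).
  { unfold Dm, D, h. field. apply Rgt_not_eq, pow2_pos. }
  assert (Hy2 : f (ptd (S m) (2 * i + 1)) = f (ptd m i) + Dm * h / 2 + c m * h / 2).
  { rewrite MID. fold (ptd m (i+1)). rewrite Hy3. unfold h. simpl. field. apply Rgt_not_eq, pow2_pos. }
  set (s := h * (4 + INR e)).
  assert (Hs : 0 < s) by (unfold s; pose proof (pos_INR e); nra).
  assert (S12 : Defs.dist P1 P2 <= s).
  { eapply Rle_trans. apply dist_le_sum. unfold P1, P2, g. cbn [fst snd]. rewrite Hy2, Hx2.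
    replace (ptd m i - (ptd m i + h / 2)) with (- (h/2)) by field.
    replace (f (ptd m i) - (f (ptd m i) + Dm * h / 2 + c m * h / 2)) with (- ((Dm + c m) * (h / 2))) by field.
    rewrite !Rabs_Ropp, Rabs_mult, (Rabs_right (h/2)) by lra.
    pose proof (Rabs_triang Dm (c m)). rewrite (Rabs_right (c m)) in H by lra.
    unfold s. pose proof (pos_INR e). nra. }
  assert (S13 : Defs.dist P1 P3 <= s).
  { eapply Rle_trans. apply dist_le_sum. unfold P1, P3, g. cbn [fst snd]. rewrite Hy3, Hx3.
    replace (ptd m i - (ptd m i + h)) with (- h) by field.
    replace (f (ptd m i) - (f (ptd m i) + Dm * h)) with (- (Dm * h)) by field.
    rewrite !Rabs_Ropp, Rabs_mult, (Rabs_right h) by lra.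
    unfold s. pose proof (pos_INR e). nra. }
  assert (Hcr : crs (sub P2 P1) (sub P3 P1) = - (c m * h * h / 2)).
  { unfold crs, sub, P1, P2, P3, g. cbn [fst snd]. rewrite Hy2, Hy3, Hx2, Hx3. field. }
  set (q := / 2 ^ (m' + 2)).
  assert (Hq : 0 < q) by (apply Rinv_0_lt_compat, pow2_pos).
  set (Rb := A * q).
  assert (HP1 : P1 = g (ptd m' u)) by (unfold P1, i; rewrite Hm, ptd_shift; reflexivity).
  assert (Hsq : s <= (A - 1) * q).
  { unfold s. rewrite Hh2. fold q. pose proof (pow2_pos e).
    apply Rle_trans with (q * ((4 + INR e) * 4 / 2 ^ e)). right. field. lra.
    apply Rle_trans with (q * ((A - 1) * 2 ^ e / 2 ^ e)).
    apply Rmult_le_compat_l; [lra|]. unfold Rdiv. apply Rmult_le_compat_r; [apply Rlt_le, Rinv_0_lt_compat; lra|lra].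
    right. field. lra. }
  assert (D01' : Defs.dist x0 P1 < q).
  { rewrite dist_sym, HP1. exact Hx0. }
  assert (D01 : Defs.dist x0 P1 <= Rb) by (unfold Rb; nra).
  assert (D02 : Defs.dist x0 P2 <= Rb).
  { pose proof (dist_triang x0 P1 P2). unfold Rb. nra. }
  assert (D03 : Defs.dist x0 P3 <= Rb).
  { pose proof (dist_triang x0 P1 P3). unfold Rb. nra. }
  assert (Him : forall k j, (j <= 2 ^ k)%nat -> image01 g (g (ptd k j))).
  { intros k j Hj. exists (ptd k j). split; [apply ptd_in01; exact Hj|reflexivity]. }
  assert (Hi1 : (i + 1 <= 2 ^ m)%nat).
  { unfold i. rewrite Hm, Nat.pow_add_r.
    assert (1 <= 2 ^ e)%nat by (apply Nat.neq_0_lt_0, Nat.pow_nonzero; lia). nia. }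
  assert (HRb : 0 < Rb) by (unfold Rb; nra).
  pose proof (beta_lb (image01 g) x0 Rb P1 P2 P3 s (c m * h * h / 2) HRb Hs
     (Him m i ltac:(lia)) (Him (S m) (2 * i + 1)%nat ltac:(simpl; lia)) (Him m (i + 1)%nat Hi1) D01 D02 D03 S12 S13) as Hb.
  rewrite Hcr, Rabs_Ropp, Rabs_right in Hb.
  2:{ apply Rle_ge. apply Rmult_le_pos; [|lra]. nra. }
  specialize (Hb (Rle_refl _)).
  assert (Hk : c m * h * h / 2 / (8 * s * Rb) = kap A e * c m).
  { unfold s, Rb, kap. rewrite Hh2. fold q. field. pose proof (pos_INR e). pose proof (pow2_pos e).
    repeat split; lra. }
  rewrite Hk in Hb.
  unfold S_term. simpl fst. simpl snd. rewrite pow2m_nat. fold q.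
  fold Rb.
  assert (Hkap : 0 < kap A e * c m).
  { unfold kap. apply Rmult_lt_0_compat; [|lra]. apply Rinv_0_lt_compat. pose proof (pos_INR e). pose proof (pow2_pos e).
    apply Rmult_lt_0_compat; [|lra]. nra. }
  unfold rpow. destruct (Rlt_dec 0 (beta (image01 g) (cball x0 Rb))) as [Hpos|Hneg]; [|lra].
  pose proof (diam_ball_ge x0 Rb HRb).
  apply Rmult_le_compat.
  - apply Rlt_le, exp_pos.
  - lra.
  - apply Rle_Rpower_l; lra.
  - unfold Rb in *. nra.
Qed.

Lemma nat_above y : exists t : nat, y <= INR t.
Proof.
  destruct (archimed y) as [H1 _]. exists (Z.to_nat (up y)).
  destruct (Z.le_gt_cases 0 (up y)) as [Hz|Hz].
  - rewrite INR_IZR_INZ, Znat.Z2Nat.id by exact Hz. lra.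
  - apply IZR_lt in Hz. pose proof (pos_INR (Z.to_nat (up y))). lra.
Qed.

Lemma pow2_ge_nat t : INR t + 1 <= 2 ^ t.
Proof. induction t. simpl. lra. rewrite S_INR. simpl. pose proof (pow2_pos t). pose proof (pos_INR t). lra. Qed.

Lemma pick_e A : A > 1 -> exists e : nat, (4 + INR e) * 4 <= (A - 1) * 2 ^ e.
Proof.
  intros HA. destruct (nat_above (16 / (A - 1))) as [t Ht].
  exists (2 * t)%nat. rewrite pow_mult, mult_INR. replace ((2:R)^2) with 4 by ring.
  assert (E4 : 4 ^ t = 2 ^ t * 2 ^ t) by (rewrite <- Rpow_mult_distr; f_equal; ring).
  rewrite E4. pose proof (pow2_ge_nat t). pose proof (pos_INR t). simpl INR.
  assert (16 <= (A - 1) * (INR t + 1)).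
  { apply (Rmult_le_compat_l (A - 1)) in Ht; [|lra].
    replace ((A - 1) * (16 / (A - 1))) with 16 in Ht by (field; lra). lra. }
  assert ((A - 1) * ((INR t + 1) * (INR t + 1)) <= (A - 1) * (2 ^ t * 2 ^ t)).
  { apply Rmult_le_compat_l; [lra|]. apply Rmult_le_compat; lra. }
  nra.
Qed.

Definition cblk (J : nat) : R := / (sqrt 2 ^ J * (INR J + 1)).

Lemma c_block J t : (t < 2 ^ J)%nat -> c (2 ^ J - 1 + t) = cblk J.
Proof.
  intros Ht. unfold c, cblk, jb.
  assert (0 < 2 ^ J)%nat by (apply Nat.neq_0_lt_0, Nat.pow_nonzero; lia).
  rewrite (Nat.log2_unique (S (2 ^ J - 1 + t)) J); [reflexivity|lia|]. simpl. lia.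
Qed.

Lemma exp_ge x : 1 + x <= exp x.
Proof. destruct (Req_dec x 0) as [->|H]. rewrite exp_0. lra. left. apply exp_ineq1. exact H. Qed.

Lemma growth r kp B e : 0 < r < 2 -> 0 < kp ->
  exists J, (e < 2 ^ J)%nat /\ B < 2 ^ J * Rpower (kp * cblk J) r.
Proof.
  intros Hr Hk.
  set (K := Rpower kp r). assert (HK : 0 < K) by (unfold K, Rpower; apply exp_pos).
  pose proof ln_lt_2 as Hl2.
  set (al := ln 2 * (1 - r / 2)). assert (Hal : 0 < al) by (unfold al; nra).
  set (B1 := Rabs (B / K)).
  destruct (nat_above ((2 * r + al + B1) / al + 1 + INR e)) as [t Ht].
  pose proof (Rabs_pos (B / K)) as HB1. fold B1 in HB1. pose proof (pos_INR e).
  assert (Ht1 : (2 * r + al + B1) / al + 1 <= INR t) by lra.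
  assert (Hte : INR e + 1 <= INR t).
  { assert (0 <= (2 * r + al + B1) / al) by (apply Rdiv_le_0_compat; lra). lra. }
  assert (Hte' : (e + 1 <= t)%nat) by (apply INR_le; rewrite plus_INR; simpl; lra).
  set (J := (t * t - 1)%nat). exists J. split.
  { assert (J < 2 ^ J)%nat by (apply Nat.pow_gt_lin_r; lia). unfold J in *. nia. }
  assert (HtR : 1 <= INR t) by lra.
  assert (HJ : INR J + 1 = INR t * INR t).
  { unfold J. rewrite <- mult_INR. replace (t * t)%nat with (S (t * t - 1)) at 2 by nia. rewrite S_INR. ring. }
  assert (Hs2 : ln (sqrt 2) = ln 2 / 2).
  { assert (ln (sqrt 2 ^ 2) = 2 * ln (sqrt 2)) by (rewrite ln_pow; [simpl; ring|apply sqrt_lt_R0; lra]).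
    rewrite <- Rsqr_pow2, Rsqr_sqrt in H0 by lra. lra. }
  assert (Hsp : 0 < sqrt 2) by (apply sqrt_lt_R0; lra).
  assert (Hc : ln (cblk J) = - (INR J * (ln 2 / 2) + 2 * ln (INR t))).
  { assert (Q1 : 0 < sqrt 2 ^ J) by (apply pow_lt; lra).
    assert (Q2 : 0 < INR J + 1) by (pose proof (pos_INR J); lra).
    unfold cblk. rewrite ln_Rinv by (apply Rmult_lt_0_compat; assumption).
    rewrite ln_mult by assumption. rewrite ln_pow by lra. rewrite Hs2, HJ. rewrite ln_mult by lra. ring. }
  assert (Hcp : 0 < cblk J).
  { unfold cblk. apply Rinv_0_lt_compat, Rmult_lt_0_compat. apply pow_lt; lra. pose proof (pos_INR J); lra. }
  rewrite <- Rpower_mult_distr by lra. fold K.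
  assert (H2J : 2 ^ J = exp (INR J * ln 2)).
  { rewrite <- ln_pow by lra. rewrite exp_ln; [reflexivity|apply pow_lt; lra]. }
  unfold Rpower at 1. rewrite Hc, H2J.
  replace (exp (INR J * ln 2) * (K * exp (r * - (INR J * (ln 2 / 2) + 2 * ln (INR t)))))
    with (K * exp (INR J * ln 2 + r * - (INR J * (ln 2 / 2) + 2 * ln (INR t)))) by (rewrite exp_plus; ring).
  set (y := INR J * ln 2 + r * - (INR J * (ln 2 / 2) + 2 * ln (INR t))).
  assert (Hlnt : ln (INR t) <= INR t).
  { pose proof (exp_ge (ln (INR t))). rewrite exp_ln in H0 by lra. lra. }
  assert (Hy : B1 <= y).
  { unfold y. replace (INR J) with (INR t * INR t - 1) by lra.
    assert (al * INR t >= 2 * r + al + B1).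
    { apply (Rmult_le_compat_l al) in Ht1; [|lra].
      replace (al * ((2 * r + al + B1) / al + 1)) with (2 * r + al + B1 + al) in Ht1 by (field; lra). lra. }
    assert (al * INR t * INR t >= (2 * r + al + B1) * INR t) by nra.
    unfold al in *. nra. }
  pose proof (exp_ge y).
  assert (B / K <= B1) by apply Rle_abs.
  assert (B <= K * B1).
  { apply (Rmult_le_compat_l K) in H1; [|lra]. replace (K * (B / K)) with B in H1 by (field; lra). exact H1. }
  nra.
Qed.

Definition sumL (A r : R) (l : list (Z * pt)) : R :=
  fold_right (fun kx acc => S_term (image01 g) A r kx + acc) 0 l.

Lemma sumL_app A r l1 l2 : sumL A r (l1 ++ l2) = sumL A r l1 + sumL A r l2.
Proof. induction l1; simpl. ring. unfold sumL in *. simpl. rewrite IHl1. ring. Qed.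

Definition good (m' u : nat) : bool := if Rle_dec (D m' u * D m' u) 4 then true else false.

Lemma count_good m' K : psum (fun u => 1 - D m' u * D m' u / 4) K <= INR (length (filter (good m') (seq 0 K))).
Proof.
  induction K.
  - simpl. lra.
  - rewrite seq_S, filter_app, length_app. cbn [psum]. rewrite plus_INR. replace (0 + K)%nat with K by lia.
    assert (Hg : (good m' K = true /\ D m' K * D m' K <= 4) \/ (good m' K = false /\ 4 < D m' K * D m' K)).
    { unfold good. destruct (Rle_dec (D m' K * D m' K) 4); [left|right]; split; auto; lra. }
    cbn [filter]. destruct Hg as [[Hg HD]|[Hg HD]]; rewrite Hg; cbn [length INR].
    + pose proof (Rle_0_sqr (D m' K)). unfold Rsqr in *. lra.
    + lra.
Qed.

Lemma sumL_map_lb A r (F : nat -> Z * pt) (l : list nat) LB :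
  0 <= LB -> (forall u, In u l -> LB <= S_term (image01 g) A r (F u)) ->
  INR (length l) * LB <= sumL A r (map F l).
Proof.
  induction l; intros H0 H.
  - simpl. lra.
  - cbn [map length]. unfold sumL. cbn [fold_right]. fold (sumL A r (map F l)).
    rewrite S_INR. pose proof (H a (or_introl eq_refl)).
    pose proof (IHl H0 (fun u Hu => H u (or_intror Hu))). lra.
Qed.

Lemma level_sum A r e m' (F : nat -> pt) : A > 1 -> 0 < r ->
  (4 + INR e) * 4 <= (A - 1) * 2 ^ e ->
  (forall u, (u < 2 ^ m')%nat -> Defs.dist (g (ptd m' u)) (F u) < / 2 ^ (m' + 2)) ->
  Rpower (kap A e * c (m' + e)) r / 16 <= sumL A r (map (fun u => (Z.of_nat m' + 2, F u)%Z) (filter (good m') (seq 0 (2 ^ m')))).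
Proof.
  intros HA Hr He HF.
  set (LB := Rpower (kap A e * c (m' + e)) r * / 2 ^ (m' + 2)).
  assert (HLB : 0 <= LB).
  { unfold LB, Rpower. apply Rmult_le_pos. apply Rlt_le, exp_pos. apply Rlt_le, Rinv_0_lt_compat, pow2_pos. }
  eapply Rle_trans. 2: apply sumL_map_lb.
  - eapply Rle_trans. 2: apply Rmult_le_compat_r; [exact HLB|apply count_good].
    rewrite (psum_ext (fun u => 1 - D m' u * D m' u / 4) (fun u => 1 + (- / 4) * (D m' u * D m' u)) (2 ^ m')) by (intros; field).
    rewrite psum_plus, psum_const, psum_scal, SQ, INR_pow2.
    pose proof (psum_cc_bound m'). unfold cc in H.
    pose proof (pow2_pos m').
    assert (2 ^ m' / 4 <= 2 ^ m' * 1 + - / 4 * (2 ^ m' * psum (fun n : nat => c n * c n) m')) by nra.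
    unfold LB. rewrite pow_add.
    assert (0 <= Rpower (kap A e * c (m' + e)) r) by (unfold Rpower; apply Rlt_le, exp_pos).
    apply Rle_trans with (2 ^ m' / 4 * (Rpower (kap A e * c (m' + e)) r * / (2 ^ m' * 2 ^ 2))).
    + right. simpl. field. lra.
    + apply Rmult_le_compat_r; [|lra]. apply Rmult_le_pos; [lra|]. apply Rlt_le, Rinv_0_lt_compat.
      simpl. nra.
  - exact HLB.
  - intros u Hu. apply filter_In in Hu. destruct Hu as [Hu Hg]. apply in_seq in Hu.
    unfold good in Hg. destruct (Rle_dec (D m' u * D m' u) 4) as [HD|]; [|discriminate].
    cbv beta. unfold LB. apply (term_lb A r e m' u (F u)); [exact HA|exact Hr|exact He|lia|exact HD|apply HF; lia].
Qed.

Lemma in_level m' (F : nat -> pt) kx :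
  In kx (map (fun u => (Z.of_nat m' + 2, F u)%Z) (filter (good m') (seq 0 (2 ^ m')))) ->
  fst kx = (Z.of_nat m' + 2)%Z /\ exists u, (u < 2 ^ m')%nat /\ snd kx = F u.
Proof.
  intros H. apply in_map_iff in H. destruct H as [u [<- Hu]].
  apply filter_In in Hu. destruct Hu as [Hu _]. apply in_seq in Hu.
  split; [reflexivity|]. exists u. split; [lia|reflexivity].
Qed.

Lemma level_nodup m' (F : nat -> pt) :
  (forall u, (u < 2 ^ m')%nat -> Defs.dist (g (ptd m' u)) (F u) < / 2 ^ (m' + 2)) ->
  NoDup (map (fun u => (Z.of_nat m' + 2, F u)%Z) (filter (good m') (seq 0 (2 ^ m')))).
Proof.
  intros HF. apply NoDup_map_NoDup_ForallPairs.
  - intros u v Hu Hv Heq. apply filter_In in Hu, Hv. destruct Hu as [Hu _]. destruct Hv as [Hv _].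
    apply in_seq in Hu, Hv. injection Heq as Heq.
    destruct (Nat.eq_dec u v) as [|Hne]; [assumption|exfalso].
    pose proof (HF u ltac:(lia)). pose proof (HF v ltac:(lia)). rewrite Heq in H.
    pose proof (dist_triang (g (ptd m' u)) (F v) (g (ptd m' v))).
    rewrite (dist_sym (F v)) in H1.
    pose proof (dist_ge_fst (g (ptd m' u)) (g (ptd m' v))). unfold g in H2. cbn [fst] in H2. fold (g (ptd m' u)) (g (ptd m' v)) in H2.
    assert (Hd : / 2 ^ m' <= Rabs (ptd m' u - ptd m' v)).
    { unfold ptd. pose proof (pow2_pos m').
      replace (INR u / 2 ^ m' - INR v / 2 ^ m') with ((INR u - INR v) * / 2 ^ m') by (field; lra).
      rewrite Rabs_mult, (Rabs_right (/ 2 ^ m')) by (apply Rle_ge, Rlt_le, Rinv_0_lt_compat; lra).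
      rewrite <- (Rmult_1_l (/ 2 ^ m')) at 1. apply Rmult_le_compat_r. apply Rlt_le, Rinv_0_lt_compat; lra.
      destruct (Nat.lt_ge_cases u v).
      - assert (INR (u + 1) <= INR v) by (apply le_INR; lia). rewrite plus_INR in H5. simpl in H5.
        rewrite Rabs_left by lra. lra.
      - assert (INR (v + 1) <= INR u) by (apply le_INR; lia). rewrite plus_INR in H5. simpl in H5.
        rewrite Rabs_right by lra. lra. }
    assert (/ 2 ^ (m' + 2) + / 2 ^ (m' + 2) < / 2 ^ m').
    { rewrite pow_add. pose proof (pow2_pos m') as Hpm. simpl.
      replace (/ (2 ^ m' * (2 * (2 * 1))) + / (2 ^ m' * (2 * (2 * 1)))) with (/ 2 ^ m' / 2) by (field; lra).
      pose proof (Rinv_0_lt_compat _ Hpm). lra. }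
    lra.
  - apply NoDup_filter, seq_NoDup.
Qed.

Theorem mainTheorem7 :
  exists g : R -> pt,
    continuous_on_01 g /\
    H1_finite (image01 g) /\
    forall (A : R), A > 1 ->
    forall (X : Z -> pt -> Prop), multires_nets (image01 g) X ->
    forall eps : R, 0 < eps < 2 ->
      S_infinite (image01 g) A X (2 - eps).
Proof.
  exists g. split; [exact g_cont|split; [exact g_H1|]].
  intros A HA X [Hnest Hnet] eps Heps M.
  set (r := 2 - eps). assert (Hr : 0 < r < 2) by (unfold r; lra).
  destruct (pick_e A HA) as [e He].
  assert (Hkp : 0 < kap A e).
  { unfold kap. apply Rinv_0_lt_compat. pose proof (pos_INR e). pose proof (pow2_pos e).
    apply Rmult_lt_0_compat; [|lra]. nra. }
  destruct (growth r (kap A e) (16 * M) e Hr Hkp) as [J [HeJ HJ]].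
  assert (Hch : forall m' u : nat, exists y, (u < 2 ^ m')%nat ->
      X (Z.of_nat m' + 2)%Z y /\ Defs.dist (g (ptd m' u)) y < / 2 ^ (m' + 2)).
  { intros m' u. destruct (classic (u < 2 ^ m')%nat) as [Hu|Hu].
    - destruct (Hnet (Z.of_nat m' + 2)%Z) as [_ [_ Hcov]].
      destruct (Hcov (g (ptd m' u))) as [y [Hy1 Hy2]].
      + exists (ptd m' u). split; [apply ptd_in01; lia|reflexivity].
      + exists y. intros _. rewrite pow2m_nat in Hy2. split; assumption.
    - exists (0, 0). intros H. contradiction. }
  set (F := fun m' u => proj1_sig (constructive_indefinite_description _ (Hch m' u))).
  assert (HF : forall m' u, (u < 2 ^ m')%nat -> X (Z.of_nat m' + 2)%Z (F m' u) /\ Defs.dist (g (ptd m' u)) (F m' u) < / 2 ^ (m' + 2)).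
  { intros m' u Hu. unfold F. destruct (constructive_indefinite_description _ (Hch m' u)) as [y Hy]. simpl. apply Hy, Hu. }
  set (Lm := fun m' => map (fun u => (Z.of_nat m' + 2, F m' u)%Z) (filter (good m') (seq 0 (2 ^ m')))).
  set (m0 := (2 ^ J - 1 - e)%nat).
  assert (Hall : forall n, (n <= 2 ^ J)%nat ->
     NoDup (flat_map Lm (seq m0 n)) /\
     (forall kx, In kx (flat_map Lm (seq m0 n)) -> X (fst kx) (snd kx) /\ exists m', (m0 <= m' < m0 + n)%nat /\ fst kx = (Z.of_nat m' + 2)%Z) /\
     INR n * (Rpower (kap A e * cblk J) r / 16) <= sumL A r (flat_map Lm (seq m0 n))).
  { induction n; intros Hn.
    - simpl. split; [constructor|split]. intros kx []. unfold sumL. simpl. lra.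
    - destruct (IHn ltac:(lia)) as [N1 [I1 S1]].
      rewrite seq_S, flat_map_app.
      assert (Hfm : flat_map Lm ((m0 + n)%nat :: nil) = Lm (m0 + n)%nat) by (simpl; apply app_nil_r).
      rewrite Hfm. unfold Lm at 2.
      assert (HL : forall u, (u < 2 ^ (m0 + n))%nat -> Defs.dist (g (ptd (m0 + n) u)) (F (m0 + n)%nat u) < / 2 ^ (m0 + n + 2)).
      { intros u Hu. apply HF. exact Hu. }
      split; [|split].
      + apply NoDup_app. exact N1. apply level_nodup. exact HL.
        intros kx Hin1 Hin2. destruct (I1 kx Hin1) as [_ [m' [Hm' Hf]]].
        destruct (in_level _ _ _ Hin2) as [Hf2 _]. rewrite Hf in Hf2. lia.
      + intros kx Hin. apply in_app_or in Hin. destruct Hin as [Hin|Hin].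
        * destruct (I1 kx Hin) as [HX [m' [Hm' Hf]]]. split; [exact HX|]. exists m'. split; [lia|exact Hf].
        * destruct (in_level _ _ _ Hin) as [Hf [u [Hu Hs]]]. split.
          -- rewrite Hf, Hs. apply HF. exact Hu.
          -- exists (m0 + n)%nat. split; [lia|exact Hf].
      + rewrite sumL_app. rewrite S_INR.
        pose proof (level_sum A r e (m0 + n) (F (m0 + n)%nat) HA (proj1 Hr) He HL).
        assert (Hc : c (m0 + n + e) = cblk J).
        { replace (m0 + n + e)%nat with (2 ^ J - 1 + n)%nat by (unfold m0; lia). apply c_block. lia. }
        rewrite Hc in H. unfold Lm in H, S1 |- *. lra. }
  destruct (Hall (2 ^ J)%nat (le_n _)) as [N [I S]].
  exists (flat_map Lm (seq m0 (2 ^ J))). split; [exact N|split].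
  - intros kx Hin. apply (I kx Hin).
  - change (diam (image01 g) + sumL A r (flat_map Lm (seq m0 (2 ^ J))) > M).
    pose proof (diam_nonneg (image01 g)). rewrite INR_pow2 in S. lra.
Qed.
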